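(* There exist absolute constants $c>0$ and $n_0$ such that for every integer $n\ge n_0$ and every $\varepsilon$ with $n^{-1/3} < \varepsilon < 1/2$, there exists an $n$-point set $X \subset \mathbb{R}$ such that every simultaneous $\varepsilon$-coreset of $X$ for $p$-Centrum with $k=1$ has size at least $c\,\varepsilon^{-1/2}\log n$.
   Context: For a finite multiset $Y\subset\mathbb{R}$ and a point $c\in\mathbb{R}$, $\mathrm{cost}_p(Y,c)$ is the sum of the $p$ largest values among $\{|y-c|\}_{y\in Y}$ (with multiplicity; the sum of all of them if $|Y|<p$). A coreset is a finite set of points with positive integer weights, viewed as a multiset; its size is the number of distinct points. A multiset $D\subset \mathbb{R}$ is a simultaneous $\varepsilon$-coreset of $X$ (with $|X|=n$) for $p$-Centrum with $k=1$ if for every $p\in\{1,\dots,n\}$ and every $c\in\mathbb{R}$, $(1-\varepsilon)\mathrm{cost}_p(X,c)\le\mathrm{cost}_p(D,c)\le(1+\varepsilon)\mathrm{cost}_p(X,c)$. *)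

(* Defs.v *)
From HB Require Import structures.
From mathcomp Require Import all_boot all_order all_algebra.
From mathcomp Require Import all_classical all_reals all_analysis.
From Stdlib Require Import Rdefinitions.
From mathcomp Require Import Rstruct.
Set Implicit Arguments. Unset Strict Implicit. Unset Printing Implicit Defensive.
Import Order.TTheory GRing.Theory Num.Theory.
Local Open Scope ring_scope.

(* A finite multiset of reals is represented by a sequence (with repetitions);
   a weighted coreset with positive integer weights is the same thing as a multiset,
   and its size (number of distinct points) is [size (undup D)]. *)

Definition cost (p : nat) (Y : seq R) (c : R) : R :=
  \sum_(x <- take p (sort (fun a b : R => b <= a) [seq `|y - c| | y <- Y])) x.

Definition simul_coreset (eps : R) (X D : seq R) : Prop :=
  forall (p : nat) (c : R), leq 1 p -> leq p (size X) ->
    (1 - eps) * cost p X c <= cost p D c /\ cost p D c <= (1 + eps) * cost p X c.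

Definition csize (D : seq R) : nat := size (undup D).

(* Main.v *)
Require Import Defs.
From HB Require Import structures.
From mathcomp Require Import all_boot all_order all_algebra.
From mathcomp Require Import all_classical all_reals all_analysis.
From Stdlib Require Import Rdefinitions.
From mathcomp Require Import Rstruct.
From mathcomp Require Import ring lra zify.
Import Order.TTheory GRing.Theory Num.Theory.
Local Open Scope ring_scope.
Lemma sum_take_nth (w : seq R) (p : nat) :
  \sum_(x <- take p w) x = \sum_(i < p) w`_i.
Proof.
elim: w p => [|x w IH] p.
  by rewrite big_nil big1 // => i _; rewrite nth_nil.
case: p => [|p]; first by rewrite take0 big_nil big_ord0.
by rewrite /= big_cons big_ord_recl /= IH.
Qed.

Definition geR := fun a b : R => b <= a.

Lemma geR_trans : transitive geR.
Proof. by move=> y x z h1 h2; rewrite /geR (le_trans h2 h1). Qed.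

Definition wD (D : seq R) (c : R) := sort geR [seq `|y - c| | y <- D].

Lemma cost_nth p D c : cost p D c = \sum_(i < p) (wD D c)`_i.
Proof. by rewrite /cost sum_take_nth. Qed.

Definition sq (i : nat) : R := Num.sqrt (i%:R).
Definition Xs (n : nat) : seq R := [seq sq i.+1 - sq i | i <- iota 0 n].

Lemma sq_sqr (s : nat) : sq (s * s) = s%:R.
Proof. by rewrite /sq natrM -expr2 sqrtr_sqr ger0_norm. Qed.

Lemma dsq_gt0 i : 0 < sq i.+1 - sq i.
Proof. by rewrite subr_gt0 /sq ltr_sqrt ?ltr_nat. Qed.

Lemma dsq_decr i : sq i.+2 - sq i.+1 < sq i.+1 - sq i.
Proof.
rewrite /sq.
set a := Num.sqrt (i%:R : R); set b := Num.sqrt (i.+1%:R : R); set c := Num.sqrt (i.+2%:R : R).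
have a0 : 0 <= a by apply: sqrtr_ge0.
have b0 : 0 <= b by apply: sqrtr_ge0.
have c0 : 0 <= c by apply: sqrtr_ge0.
have ha : a ^+ 2 = i%:R by rewrite sqr_sqrtr.
have hb : b ^+ 2 = i%:R + 1 by rewrite sqr_sqrtr // -natr1.
have hc : c ^+ 2 = i%:R + 2 by rewrite sqr_sqrtr // -addn2 natrD.
have i0 : 0 <= (i%:R : R) by [].
have hac : a * c < i%:R + 1.
  have h : (a * c) ^+ 2 < (i%:R + 1) ^+ 2 by rewrite exprMn ha hc; nra.
  have : 0 <= a * c by apply: mulr_ge0.
  nra.
have hs : (c + a) ^+ 2 < (2 * b) ^+ 2 by nra.
nra.
Qed.

Definition ltR := fun a b : R => b < a.

Lemma sorted_gen n m : sorted ltR [seq sq i.+1 - sq i | i <- iota m n].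
Proof.
elim: n m => [|n IH] m //=.
case: n IH => [|n] IH //=.
apply/andP; split; first by rewrite /ltR dsq_decr.
by have := IH m.+1.
Qed.

Lemma sorted_Xs n : sorted ltR (Xs n).
Proof. exact: sorted_gen. Qed.

Lemma uniq_Xs n : uniq (Xs n).
Proof.
apply: (sorted_uniq _ _ (sorted_Xs n)).
- by move=> y x z h1 h2; rewrite /ltR (lt_trans h2 h1).
- by move=> x; rewrite /ltR ltxx.
Qed.

Lemma size_Xs n : size (Xs n) = n.
Proof. by rewrite /Xs size_map size_iota. Qed.

Lemma wD_Xs n : wD (Xs n) 0 = Xs n.
Proof.
rewrite /wD; have -> : [seq `|y - 0| | y <- Xs n] = Xs n.
  rewrite /Xs -map_comp; apply: eq_map => i /=.
  by rewrite subr0 gtr0_norm // dsq_gt0.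
apply: (sorted_sort geR_trans).
apply: sub_sorted (sorted_Xs n) => x y; rewrite /ltR /geR; exact: ltW.
Qed.

Lemma cost_Xs (n p : nat) : leq p n -> cost p (Xs n) 0 = sq p.
Proof.
move=> pn; rewrite cost_nth wD_Xs.
rewrite (eq_bigr (fun i : 'I_p => sq (nat_of_ord i).+1 - sq i)); last first.
  move=> i _; rewrite /Xs (nth_map 0%N); last by rewrite size_iota (leq_trans (ltn_ord i)).
  by rewrite nth_iota ?add0n // (leq_trans (ltn_ord i)).
rewrite -(big_mkord xpredT (fun i => sq i.+1 - sq i)) telescope_sumr //.
by rewrite /sq sqrtr0 subr0.
Qed.

Lemma wD_sorted D c : sorted geR (wD D c).
Proof. apply: sort_sorted => x y; rewrite /geR; exact: le_total. Qed.

Lemma wD_nonneg D c x : x \in wD D c -> 0 <= x.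
Proof. by rewrite mem_sort => /mapP [y _ ->]. Qed.

Lemma nth_ge0 D c i : 0 <= (wD D c)`_i.
Proof.
case: (ltnP i (size (wD D c))) => h; first exact: (@wD_nonneg D c _ (mem_nth (0:R) h)).
by rewrite nth_default.
Qed.

Lemma nth_mono D c j k : leq j k -> (wD D c)`_k <= (wD D c)`_j.
Proof.
move=> jk.
case: (ltnP k (size (wD D c))) => hk.
  have hj : (j < size (wD D c))%nat by apply: leq_ltn_trans hk.
  have := sorted_leq_nth geR_trans _ (0:R) (wD_sorted D c) j k hj hk jk; apply.
  by move=> x; rewrite /geR.
by rewrite (nth_default 0 hk) nth_ge0.
Qed.

Lemma count_windows D (K : nat) (lo hi : nat -> nat) :
  (forall t, (t < K)%nat -> exists i,
     [/\ leq (lo t) i, (i.+1 < hi t)%nat & (wD D 0)`_i != (wD D 0)`_i.+1]) ->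
  (forall t t', (t < t')%nat -> (t' < K)%nat -> leq (hi t) (lo t')) ->
  leq K (csize D).
Proof.
move=> Hw Hc.
set w := wD D 0.
pose V t := w`_(lo t).
have Hlt t t' : (t < t')%nat -> (t' < K)%nat -> V t' < V t.
  move=> tt' t'K.
  have [i [h1 h2 h3]] := Hw t (ltn_trans tt' t'K).
  have h4 : w`_i.+1 < w`_i by rewrite lt_neqAle eq_sym h3 nth_mono.
  apply: (le_lt_trans _ (lt_le_trans h4 _)); last exact: nth_mono.
  apply: nth_mono; apply: leq_trans (Hc _ _ tt' t'K).
  exact: ltnW.
have Hmem t : (t < K)%nat -> V t \in w.
  move=> tK; have [i [h1 h2 h3]] := Hw t tK.
  apply: mem_nth.
  case: (ltnP i (size w)) => hs; first exact: leq_ltn_trans h1 hs.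
  by move: h3; rewrite !nth_default ?eqxx // (leq_trans hs).
have Hu : uniq [seq V t | t <- iota 0 K].
  rewrite map_inj_in_uniq ?iota_uniq // => t t'; rewrite !mem_iota !add0n /= => tK t'K e.
  case: (ltngtP t t') => // h.
    by have := Hlt _ _ h t'K; rewrite e ltxx.
  by have := Hlt _ _ h tK; rewrite e ltxx.
have := uniq_leq_size Hu (s2 := [seq `|y - 0| | y <- undup D]).
rewrite size_map size_iota size_map; apply.
move=> x /mapP [t]; rewrite mem_iota add0n /= => tK ->.
have := Hmem t tK; rewrite /w /wD mem_sort => /mapP [y yD ->].
by apply: map_f; rewrite mem_undup.
Qed.

Lemma window_change eps n D (A M B : nat) :
  simul_coreset eps (Xs n) D -> (0 < A)%nat -> (A < M)%nat -> (M < B)%nat ->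
  leq (B * B)%nat n ->
  2 * eps * (A%:R + B%:R) * M%:R < (1 + eps) * (M%:R - A%:R) * (B%:R - M%:R) ->
  exists i, [/\ leq (A * A)%nat i, (i.+1 < (B * B)%nat)%nat & (wD D 0)`_i != (wD D 0)`_i.+1].
Proof.
move=> Hcs A0 AM MB Bn Hcond.
case: (pselect (exists i, [/\ leq (A * A)%nat i, (i.+1 < (B * B)%nat)%nat & (wD D 0)`_i != (wD D 0)`_i.+1])) => // Hn.
exfalso.
set w := wD D 0.
have Hc k : ((A * A + k)%nat.+1 < (B * B)%nat)%nat -> w`_(A * A + k)%nat = w`_(A * A + k)%nat.+1.
  move=> h; apply/eqP; apply/negPn/negP => ne; apply: Hn; exists (A * A + k)%nat; split => //.
  exact: leq_addr.
have Hv k : ((A * A + k)%nat < (B * B)%nat)%nat -> w`_(A * A + k)%nat = w`_(A * A)%nat.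
  elim: k => [|k IH]; first by rewrite addn0.
  move=> h; rewrite addnS in h *.
  rewrite -(Hc k h); apply: IH; exact: ltn_trans h.
pose G p := \sum_(i < p) w`_i.
have HG k : leq (A * A + k)%nat (B * B)%nat -> G (A * A + k)%nat = G (A * A)%nat + k%:R * w`_(A * A)%nat.
  elim: k => [|k IH]; first by move=> _; rewrite ?addn0 ?mulr0n ?mul0r ?addr0.
  move=> h; rewrite addnS in h *.
  rewrite /G big_ord_recr /=.
  change (G (A * A + k)%nat + w`_(A * A + k)%nat = G (A * A)%nat + k.+1%:R * w`_(A * A)%nat).
  rewrite IH; last exact: ltnW.
  by rewrite Hv // -natr1 mulrDl mul1r addrA.
have AMl : leq (A * A)%nat (M * M)%nat by apply: leq_mul; apply: ltnW.
have MBl : leq (M * M)%nat (B * B)%nat by apply: leq_mul; apply: ltnW.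
have ABl : leq (A * A)%nat (B * B)%nat := leq_trans AMl MBl.
have GM := HG (M * M - A * A)%nat; rewrite subnKC // in GM.
have GB := HG (B * B - A * A)%nat; rewrite subnKC // in GB.
have GM' := GM MBl; have GB' := GB (leqnn _).
have Hp (p : nat) : (0 < p)%nat -> leq p n ->
   (1 - eps) * sq p <= G p /\ G p <= (1 + eps) * sq p.
  move=> p0 pn; have := Hcs p 0 p0; rewrite size_Xs => /(_ pn).
  by rewrite cost_Xs // cost_nth.
have a0 : (0 < (A * A)%nat)%nat by rewrite muln_gt0 A0.
have m0 : (0 < (M * M)%nat)%nat by rewrite muln_gt0 (ltn_trans A0 AM).
have b0 : (0 < (B * B)%nat)%nat by rewrite muln_gt0 (ltn_trans A0 (ltn_trans AM MB)).
have [_ Ha] := Hp _ a0 (leq_trans ABl Bn).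
have [Hm _] := Hp _ m0 (leq_trans MBl Bn).
have [_ Hb] := Hp _ b0 Bn.
rewrite !sq_sqr in Ha Hm Hb.
rewrite GM' in Hm; rewrite GB' in Hb.
rewrite !natrB // !natrM in Hm Hb.
move: Ha Hm Hb Hcond.
have : (A%:R : R) < M%:R by rewrite ltr_nat.
have : (M%:R : R) < B%:R by rewrite ltr_nat.
have : 0 < (A%:R : R) by rewrite ltr0n.
set a := (A%:R : R); set m := (M%:R : R); set b := (B%:R : R).
set g := G (A * A)%nat; set v := w`_(A * A)%nat.
move=> a0' mb am Ha Hm Hb Hcond.
clearbody a m b g v.
clear -a0' mb am Ha Hm Hb Hcond.
have pba : 0 <= b * b - a * a.
  have h1 : 0 <= b - a by lra.
  have h2 : 0 <= b + a by lra.
  have := mulr_ge0 h1 h2.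
  by rewrite mulrDr !mulrBl; lra.
have pma : 0 <= m * m - a * a.
  have h1 : 0 <= m - a by lra.
  have h2 : 0 <= m + a by lra.
  have := mulr_ge0 h1 h2.
  by rewrite mulrDr !mulrBl; lra.
have pbm : 0 <= b * b - m * m.
  have h1 : 0 <= b - m by lra.
  have h2 : 0 <= b + m by lra.
  have := mulr_ge0 h1 h2.
  by rewrite mulrDr !mulrBl; lra.
have e1 : (1 - eps) * m * (b * b - a * a) <= (g + (m * m - a * a) * v) * (b * b - a * a).
  by apply: ler_wpM2r.
have e2 : (g + (b * b - a * a) * v) * (m * m - a * a) <= (1 + eps) * b * (m * m - a * a).
  by apply: ler_wpM2r.
have e3 : g * (b * b - m * m) <= (1 + eps) * a * (b * b - m * m).
  by apply: ler_wpM2r.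
have e4 : (1 - eps) * m * (b * b - a * a) <= (1 + eps) * (b * (m * m - a * a) + a * (b * b - m * m)).
  have -> : (1 + eps) * (b * (m * m - a * a) + a * (b * b - m * m)) =
            (1 + eps) * b * (m * m - a * a) + (1 + eps) * a * (b * b - m * m) by ring.
  have : (g + (m * m - a * a) * v) * (b * b - a * a) =
         (g + (b * b - a * a) * v) * (m * m - a * a) + g * (b * b - m * m) by ring.
  lra.
have e5 : (1 + eps) * (m - a) * (b - m) * (b - a) <= 2 * eps * (a + b) * m * (b - a).
  have E : b * (m * m - a * a) + a * (b * b - m * m) = m * (b * b - a * a) - (m - a) * (b - m) * (b - a) by ring.
  rewrite E in e4.
  have E2 : b * b - a * a = (b - a) * (b + a) by ring.
  rewrite E2 in e4.
  nra.
have e6 : 2 * eps * (a + b) * m * (b - a) < (1 + eps) * (m - a) * (b - m) * (b - a).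
  have hba : 0 < b - a by lra.
  by rewrite ltr_pM2r.
lra.
Qed.

Lemma eps_facts (n : nat) (eps : R) : (0 < n)%nat ->
  (n%:R : R) `^ (- (1 / 3)) < eps ->
  [/\ 0 < eps, 0 < eps `^ (- (1 / 2)), (eps `^ (- (1 / 2))) ^+ 2 * eps = 1 &
      (eps `^ (- (1 / 2))) ^+ 6 < n%:R].
Proof.
move=> n0 h.
have nR : 0 < (n%:R : R) by rewrite ltr0n.
have e0 : 0 < eps by apply: lt_trans h; apply: powR_gt0.
have x0 : 0 < eps `^ (- (1 / 2)) by apply: powR_gt0.
have x2 : (eps `^ (- (1 / 2))) ^+ 2 = eps^-1.
  rewrite -powR_mulrn ?ltW // -powRrM.
  have -> : - (1 / 2) * 2%:R = -1 :> R by field.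
  by rewrite powR_inv1 // ltW.
have x2e : (eps `^ (- (1 / 2))) ^+ 2 * eps = 1 by rewrite x2 mulVf // gt_eqF.
split => //.
have n3 : ((n%:R : R) `^ (- (1 / 3))) ^+ 3 = n%:R^-1.
  rewrite -powR_mulrn ?powR_ge0 // -powRrM.
  have -> : - (1 / 3) * 3%:R = -1 :> R by field.
  by rewrite powR_inv1 // ltW.
have h3 : (n%:R : R)^-1 < eps ^+ 3.
  by rewrite -n3 ltrXn2r // powR_ge0.
have h4 : 1 < n%:R * eps ^+ 3.
  have nn : (n%:R : R) != 0 by rewrite gt_eqF.
  by have h5 := h3; rewrite -(ltr_pM2l nR) mulfV in h5.
have -> : (eps `^ (- (1 / 2))) ^+ 6 = ((eps `^ (- (1 / 2))) ^+ 2) ^+ 3 by rewrite -exprM.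
move: h4 x2e; set y := (eps `^ (- (1 / 2))) ^+ 2 => h4 x2e.
have y0 : 0 < y by rewrite /y exprn_gt0.
have -> : (n%:R : R) = y ^+ 3 * (n%:R * eps ^+ 3) by rewrite mulrCA -exprMn x2e expr1n mulr1.
rewrite -[X in X < _]mulr1 ltr_pM2l //; exact: exprn_gt0.
Qed.

Lemma ln2_le1 : ln (2%:R : R) <= 1.
Proof.
have h : (2%:R : R) <= expR 1 by have := expR_ge1Dx (GRing.one R).
rewrite -[X in _ <= X](expRK 1).
have p2 : (2%:R : R) \is Num.pos by rewrite posrE ltr0n.
have pe : expR (GRing.one R) \is Num.pos by rewrite posrE expR_gt0.
by rewrite ler_ln.
Qed.

Lemma ln_natX (b k : nat) : (0 < b)%nat -> ln ((expn b k)%:R : R) = k%:R * ln (b%:R).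
Proof.
move=> b0; rewrite natrX lnXn ?ltr0n // mulr_natl //.
Qed.

Lemma ln_lt_pow (N b k : nat) : (0 < N)%nat -> (0 < b)%nat -> (N < expn b k)%nat ->
  ln (N%:R : R) < k%:R * ln (b%:R).
Proof.
move=> N0 b0 h; rewrite -ln_natX //.
by rewrite ltr_ln ?ltr_nat // posrE ltr0n // (ltn_trans N0 h).
Qed.

Lemma ln4096 : ln (4096%:R : R) <= 12.
Proof.
have -> : 4096%nat = expn 2 12 by [].
rewrite ln_natX //.
have := ln2_le1.
move=> h; have : (12%:R : R) * ln (2%:R) <= 12%:R * 1 by rewrite ler_pM2l ?ltr0n.
by rewrite mulr1.
Qed.

Lemma ln16 : ln (16%:R : R) <= 4.
Proof.
have -> : 16%nat = expn 2 4 by [].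
rewrite ln_natX //.
have := ln2_le1.
move=> h; have : (4%:R : R) * ln (2%:R) <= 4%:R * 1 by rewrite ler_pM2l ?ltr0n.
by rewrite mulr1.
Qed.

Lemma large_case (n : nat) (eps x : R) D :
  leq (expn 4096 2) n -> 0 < eps -> eps < 1 / 2 -> 0 <= x -> x <= 16 ->
  simul_coreset eps (Xs n) D ->
  1 / 300 * (x * ln (n%:R : R)) <= (csize D)%:R.
Proof.
move=> hn e0 e2 x0 x16 Hcs.
have n0 : (0 < n)%nat by apply: leq_trans hn.
set T := trunc_log 4096 n.
have HT : leq T (csize D).
  apply: (@count_windows D T (fun t => expn 4096 t) (fun t => expn 4096 t.+1)).
  - move=> t tT.
    have g0 : (0 < expn 64 t)%nat by rewrite expn_gt0.
    have := @window_change eps n D (expn 64 t) (8 * expn 64 t)%nat (expn 64 t.+1) Hcs g0.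
    have -> : (expn 64 t * expn 64 t)%nat = expn 4096 t by rewrite -expnMn.
    have -> : (expn 64 t.+1 * expn 64 t.+1)%nat = expn 4096 t.+1 by rewrite -expnMn.
    apply.
    + by rewrite -[X in (X < _)%nat]mul1n ltn_pmul2r.
    + by rewrite expnS ltn_pmul2r.
    + apply: (leq_trans _ (@trunc_logP 4096 n isT n0)); rewrite leq_exp2l //.
    + rewrite natrM expnS natrM.
      have gp : 0 < ((expn 64 t)%:R : R) by rewrite ltr0n.
      move: gp; set g := ((expn 64 t)%:R : R) => gp.
      have gg : 0 < g * g by apply: mulr_gt0.
      nra.
  - by move=> t t' tt' _; rewrite leq_exp2l.
have Tn : (n < expn 4096 T.+1)%nat by apply: trunc_log_ltn.
have lnn : ln (n%:R : R) < T.+1%:R * ln (4096%:R) by apply: ln_lt_pow.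
have T2 : leq 2 T by apply: trunc_log_max.
have lg0 : 0 <= ln (n%:R : R) by apply: ln_ge0; rewrite ler1n.
have l12 := ln4096.
have HTR : (T%:R : R) <= (csize D)%:R by rewrite ler_nat.
have T2R : (2%:R : R) <= T%:R by rewrite ler_nat.
have l12' : T.+1%:R * ln (4096%:R : R) <= T.+1%:R * 12 by rewrite ler_pM2l ?ltr0n.
rewrite -natr1 in l12'.
have h1 : x * ln (n%:R : R) <= 16 * ln (n%:R : R) by apply: ler_wpM2r.
nra.
Qed.
Definition sS r t := (r + 2 * (t %% r))%nat.
Definition gS r t := expn 4 (t %/ r).

Lemma chain_small r t t' : (0 < r)%nat -> (t < t')%nat ->
  ((sS r t + 2) * gS r t <= sS r t' * gS r t')%nat.
Proof.
move=> r0 tt'.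
rewrite /sS /gS.
have ht := divn_eq t r; have ht' := divn_eq t' r.
have ur := ltn_pmod t r0; have ur' := ltn_pmod t' r0.
have le : (t %/ r <= t' %/ r)%nat by apply: leq_div2r; apply: ltnW.
move: le; rewrite leq_eqVlt => /orP [/eqP e | lt].
  rewrite -e; apply: leq_mul => //.
  rewrite e in ht.
  move: ht ht' tt'; set l := (t' %/ r * r)%nat; move=> ht ht' tt'.
  lia.
have g1 : (0 < expn 4 (t %/ r))%nat by rewrite expn_gt0.
apply: (@leq_trans (3 * r * expn 4 (t %/ r))).
  by apply: leq_mul => //; lia.
apply: (@leq_trans (r * expn 4 (t' %/ r))); last by apply: leq_mul => //; lia.
apply: (@leq_trans (r * expn 4 (t %/ r).+1)).
  rewrite expnS mulnCA mulnA; apply: leq_mul => //; lia.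
by apply: leq_mul => //; rewrite leq_exp2l.
Qed.


Lemma sS_pos r t : (0 < r)%nat -> (0 < sS r t)%nat.
Proof. by move=> r0; rewrite /sS; lia. Qed.

Lemma sS_bound r t : (0 < r)%nat -> (sS r t + 2 <= 3 * r)%nat.
Proof. by move=> r0; rewrite /sS; have := ltn_pmod t r0; lia. Qed.

Lemma sS_sq r t : (0 < r)%nat -> ((sS r t + 2) * (sS r t + 2) <= 9 * r * r)%nat.
Proof. move=> r0; have := @sS_bound r t r0; nia. Qed.

Lemma small_cond (eps x r s g : R) : 0 < eps -> x ^+ 2 * eps = 1 -> 0 < g -> 0 <= s ->
  r <= x / 16 -> s + 2 <= 3 * r ->
  2 * eps * (s * g + (s + 2) * g) * ((s + 1) * g) <
  (1 + eps) * ((s + 1) * g - s * g) * ((s + 2) * g - (s + 1) * g).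
Proof.
move=> e0 x2 gp sp rx sr.
have s1 : s + 1 < 3 * (x / 16) by lra.
have sq : (s + 1) * (s + 1) < (3 * (x / 16)) * (3 * (x / 16)).
  by apply: ltr_pM => //; lra.
have key : 4 * eps * ((s + 1) * (s + 1)) < 1 + eps by nra.
have gg : 0 < g * g by apply: mulr_gt0.
have -> : 2 * eps * (s * g + (s + 2) * g) * ((s + 1) * g) =
          (4 * eps * ((s + 1) * (s + 1))) * (g * g) by ring.
have -> : (1 + eps) * ((s + 1) * g - s * g) * ((s + 2) * g - (s + 1) * g) =
          (1 + eps) * (g * g) by ring.
by rewrite ltr_pM2r.
Qed.

Lemma final_arith (x l l16 LR rR C : R) : 0 <= l -> l + l < (LR + 1) * 3 * l16 ->
  l16 <= 4 -> 2 <= LR -> 0 <= rR -> x < 32 * rR -> 0 < x -> rR * LR <= C ->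
  1 / 300 * (x * l) <= C.
Proof.
move=> l0 hl l4 L2 rp x32 x0 HC.
have hl' : l <= 6 * (LR + 1).
  have h3 : 0 <= (LR + 1) * 3 by lra.
  have : (LR + 1) * 3 * l16 <= (LR + 1) * 3 * 4 by apply: ler_wpM2l.
  lra.
have h1 : x * l <= 32 * rR * l by apply: ler_wpM2r => //; apply: ltW.
have h2 : 32 * rR * l <= 32 * rR * (6 * (LR + 1)) by apply: ler_wpM2l => //; lra.
have h3 : rR * (192 * (LR + 1)) <= rR * (300 * LR) by apply: ler_wpM2l => //; lra.
have e1 : 32 * rR * (6 * (LR + 1)) = rR * (192 * (LR + 1)) by ring.
have e2 : rR * (300 * LR) = 300 * (rR * LR) by ring.
lra.
Qed.

Lemma cube_bound (N P Q x : R) : 0 < N -> 0 < P -> N < P * Q -> Q < x ^+ 2 -> x ^+ 6 < N ->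
  N * N < P ^+ 3.
Proof.
move=> Np Pp NP Qx x6.
have NPx : N < P * x ^+ 2 by apply: (lt_trans NP); rewrite ltr_pM2l.
have N3 : N ^+ 3 < (P * x ^+ 2) ^+ 3 by rewrite ltrXn2r // ltW.
have e6 : (P * x ^+ 2) ^+ 3 = P ^+ 3 * x ^+ 6 by rewrite exprMn -exprM.
have N3' : N ^+ 3 < P ^+ 3 * N.
  apply: (lt_trans N3); rewrite e6 ltr_pM2l //; exact: exprn_gt0.
have : N * N * N < P ^+ 3 * N by rewrite -expr2 -exprSr.
by rewrite ltr_pM2r.
Qed.
Lemma small_case (n : nat) (eps x : R) D :
  leq (expn 2 24) n -> 0 < eps -> 0 < x -> x ^+ 2 * eps = 1 -> x ^+ 6 < n%:R ->
  16 <= x -> simul_coreset eps (Xs n) D ->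
  1 / 300 * (x * ln (n%:R : R)) <= (csize D)%:R.
Proof.
move=> hn e0 x0 x2 x6 x16 Hcs.
have n0 : (0 < n)%nat by apply: leq_trans hn.
set r := Num.trunc (x / 16).
have y0 : 0 <= x / 16 by apply: divr_ge0 => //; apply: ltW.
have rle : (r%:R : R) <= x / 16 by rewrite truncn_le.
have rgt : x / 16 < r.+1%:R by rewrite -truncn_le_nat.
have r0 : (0 < r)%nat.
  rewrite lt0n; apply/negP => /eqP r0.
  by move: rgt; rewrite r0; lra.
have r1 : 1 <= (r%:R : R) by rewrite ler1n.
set q := (9 * r * r)%nat.
have q0 : (0 < q)%nat by rewrite /q !muln_gt0 r0.
have qx : (q%:R : R) < x ^+ 2.
  rewrite /q !natrM.
  have : (r%:R : R) * r%:R <= (x / 16) * (x / 16).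
    by apply: ler_pM => //; apply: ler0n.
  nra.
have q6 : (expn q 3 < n)%nat.
  rewrite -(ltr_nat R) natrX.
  apply: lt_trans x6.
  have -> : x ^+ 6 = (x ^+ 2) ^+ 3 by rewrite -exprM.
  by rewrite ltrXn2r // ler0n.
have q256 : (256 * q <= n)%nat.
  case: (leqP q (expn 2 16)) => hq.
    apply: leq_trans hn.
    have -> : expn 2 24 = (expn 2 8 * expn 2 16)%nat by rewrite -expnD.
    by rewrite leq_mul2l hq orbT.
  have e3 : expn q 3 = (q * (q * q))%nat by rewrite !expnS expn0 muln1.
  have q16 : (16 <= q)%nat.
    apply: leq_trans (ltnW hq); have -> : 16%nat = expn 2 4 by [].
    by rewrite leq_exp2l.
  rewrite e3 in q6.
  nia.
set L := trunc_log 16 (n %/ q).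
have nq256 : (256 <= n %/ q)%nat by rewrite leq_divRL.
have hL2 : (2 <= L)%nat by apply: trunc_log_max.
have nq0 : (0 < n %/ q)%nat by apply: leq_trans nq256.
have hL : (expn 16 L <= n %/ q)%nat by apply: trunc_logP.
have hqn : (q * (n %/ q) <= n)%nat.
  by rewrite mulnC {2}(divn_eq n q) leq_addr.
have HK : (r * L <= csize D)%nat.
  apply: (@count_windows D (r * L)%nat
     (fun t => ((sS r t * gS r t) * (sS r t * gS r t))%nat)
     (fun t => (((sS r t + 2) * gS r t) * ((sS r t + 2) * gS r t))%nat)).
  - move=> t tK.
    have g0 : (0 < gS r t)%nat by rewrite /gS expn_gt0.
    have s0 := @sS_pos r t r0.
    have uB := @sS_bound r t r0.
    have := @window_change eps n D (sS r t * gS r t)%nat ((sS r t + 1) * gS r t)%nat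
       ((sS r t + 2) * gS r t)%nat Hcs.
    apply.
    + by rewrite muln_gt0 s0 g0.
    + by rewrite ltn_pmul2r // addn1.
    + by rewrite ltn_pmul2r // ltn_add2l.
    + have gg : (gS r t * gS r t = expn 16 (t %/ r))%nat by rewrite /gS -expnMn.
      have lL : (t %/ r <= L)%nat by apply: ltnW; rewrite ltn_divLR // mulnC.
      have h16 : (expn 16 (t %/ r) <= n %/ q)%nat.
        by apply: leq_trans hL; rewrite leq_exp2l.
      have aa := @sS_sq r t r0.
      rewrite mulnACA gg.
      apply: leq_trans hqn; exact: leq_mul.
    + have uBR : ((sS r t)%:R : R) + 2 <= 3 * r%:R.
        have := uB; rewrite -(ler_nat R) natrD natrM; exact.
      move: uBR g0; set sn := sS r t; set gn := gS r t; clearbody sn gn => uBR g0.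
      rewrite !natrM !natrD ?mulr1n.
      have H := @small_cond eps x (r%:R) (sn%:R) (gn%:R) e0 x2.
      by apply: H => //; rewrite ?ltr0n ?ler0n.
  - move=> t t' tt' _.
    by apply: leq_mul; apply: chain_small.
have hn1 : (n < expn 16 L.+1 * q)%nat.
  apply: (leq_trans (ltn_ceil n q0)); apply: leq_mul => //.
  exact: trunc_log_ltn.
have N2 : (n%:R : R) * n%:R < ((expn 16 L.+1)%:R) ^+ 3.
  have H := @cube_bound (n%:R) ((expn 16 L.+1)%:R) (q%:R) x.
  apply: H => //; rewrite ?ltr0n ?expn_gt0 //.
  by rewrite -natrM ltr_nat.
have N2n : (n * n < expn 16 (L.+1 * 3))%nat.
  by rewrite -(ltr_nat R) natrM expnM natrX.
have nn0 : (0 < n * n)%nat by rewrite muln_gt0 n0.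
have lnN := @ln_lt_pow (n * n)%nat 16 (L.+1 * 3)%nat nn0 isT N2n.
rewrite natrM lnM ?posrE ?ltr0n // natrM -natr1 in lnN.
have H := @final_arith x (ln (n%:R : R)) (ln (16%:R : R)) (L%:R) (r%:R) (csize D)%:R.
apply: H => //.
- by apply: ln_ge0; rewrite ler1n.
- exact: ln16.
- by rewrite (ler_nat R 2 L).
- have rgt' := rgt; rewrite -[r.+1%:R]natr1 in rgt'.
  have e : x = 16 * (x / 16) by rewrite mulrC divfK.
  rewrite e; move: rgt'; set y := x / 16 => rgt'.
  clear -rgt' r1; lra.
- by rewrite -natrM ler_nat.
Qed.

Theorem theorem4p9 :
  exists (c : R) (n0 : nat), 0 < c /\
    forall (n : nat) (eps : R), leq n0 n ->
      (n%:R : R) `^ (- (1 / 3)) < eps -> eps < 1 / 2 ->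
      exists X : seq R, uniq X /\ size X = n /\
        forall D : seq R, simul_coreset eps X D ->
          c * (eps `^ (- (1 / 2)) * ln (n%:R : R)) <= (csize D)%:R.
Proof.
exists (1 / 300), (expn 2 24); split; first by rewrite divr_gt0 // ltr0n.
move=> n eps hn h1 h2.
have n0 : (0 < n)%nat by apply: leq_trans hn; rewrite expn_gt0.
have [e0 x0 x2 x6] := @eps_facts n eps n0 h1.
exists (Xs n); split; first exact: uniq_Xs.
split; first exact: size_Xs.
move=> D Hcs.
case: (lerP 16 (eps `^ (- (1 / 2)))) => hx.
  exact: (@small_case n eps _ D hn e0 x0 x2 x6 hx Hcs).
apply: (@large_case n eps _ D _ e0 h2 (ltW x0) (ltW hx) Hcs).
have -> : expn 4096 2 = expn 2 24.
  have -> : 4096%nat = expn 2 12 by [].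
  by rewrite -expnM.
exact: hn.
Qed.
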